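(* The class of subgraphs of the square grid is $(6,1)$-disjointness-expressing.
   Context: The square grid is the infinite graph with vertex set $\mathbb{Z}^2$ in which two points are adjacent iff their Euclidean distance is 1; a subgraph of the square grid means a finite graph isomorphic to a subgraph of it. A class $\mathcal{C}$ of graphs is $(s,\kappa)$-disjointness-expressing if for some constant $\alpha>0$, for every positive integer $N$ and every $X\subseteq\{1,\dots,N\}$ one can define graphs $L(X)$ and $R(X)$, each containing a labelled set $S$ of special vertices, such that for all $A,B\subseteq\{1,\dots,N\}$: (i) the graph $g(L(A),R(B))$ obtained by identifying each vertex of $S$ in $L(A)$ with the corresponding vertex of $S$ in $R(B)$ is connected and has at most $\alpha N^{1/\kappa}$ vertices; (ii) the subgraph of $g(L(A),R(B))$ induced by the closed neighborhood $N[S]$ is independent of $A,B$ (for all $A,A',B,B'$ there is an isomorphism between these induced subgraphs that is the identity on $S$) and has at most $s$ vertices; (iii) $g(L(A),R(B))\in\mathcal{C}$ if and only if $A\cap B=\emptyset$. *)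

(* Defs.v *)
From Stdlib Require Import Rdefinitions Raxioms Rpower.
From mathcomp Require Import all_boot all_order all_algebra.

Set Implicit Arguments.
Unset Strict Implicit.
Unset Printing Implicit Defensive.

Record graph := Graph { gV : finType; gadj : rel gV }.
Arguments gadj : clear implicits.

Definition simple_graph (G : graph) : Prop :=
  symmetric (gadj G) /\ irreflexive (gadj G).

Definition connected_graph (G : graph) : Prop :=
  forall x y : gV G, connect (gadj G) x y.

(* A graph G is a subgraph of the square grid iff it is isomorphic to a
   subgraph of the grid Z^2 (adjacent iff Euclidean distance 1), i.e. there
   is an injective vertex map into Z^2 sending edges to grid edges. *)
Definition grid_subgraph (G : graph) : Prop :=
  exists f : gV G -> int * int,
    injective f /\
    forall u v, gadj G u v ->
      (absz ((f u).1 - (f v).1)%R + absz ((f u).2 - (f v).2)%R = 1)%N.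

Record tgraph (k : nat) := TGraph { tg : graph; tlab : 'I_k -> gV (tg) }.
Arguments tg {k}.
Arguments tlab {k}.

Section Glue.
Variables (k : nat) (L R : tgraph k).

Definition glue_keep (v : gV (tg R)) : bool := v \notin codom (tlab R).

Definition glueV : finType :=
  (gV (tg L) + {v : gV (tg R) | glue_keep v})%type.

Definition glue_inL (u : gV (tg L)) : glueV := inl u.

(* the special vertex of R with label i is identified with the special vertex
   of L with label i *)
Definition glue_inR (v : gV (tg R)) : glueV :=
  (if v \in codom (tlab R) as b return (v \in codom (tlab R)) = b -> glueV
   then fun h => inl (tlab L (iinv h))
   else fun h => inr (exist _ v (negbT h))) (erefl _).

Definition glue_adj : rel glueV := fun x y =>
  [exists u, exists v, [&& glue_inL u == x, glue_inL v == y & gadj (tg L) u v]]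
  || [exists u, exists v, [&& glue_inR u == x, glue_inR v == y & gadj (tg R) u v]].

Definition glue_graph : graph := @Graph glueV glue_adj.

Definition glue : tgraph k :=
  @TGraph k glue_graph (fun i => glue_inL (tlab L i)).

End Glue.

Definition cnbhd k (G : tgraph k) : {set gV (tg G)} :=
  [set x | [exists i, (x == tlab G i) || gadj (tg G) (tlab G i) x]].

Definition nbhd_iso k (G1 G2 : tgraph k) : Prop :=
  exists f : gV (tg G1) -> gV (tg G2),
    [/\ {in cnbhd G1 &, injective f},
        f @: cnbhd G1 = cnbhd G2,
        (forall i, f (tlab G1 i) = tlab G2 i) &
        {in cnbhd G1 &, forall x y, gadj (tg G2) (f x) (f y) = gadj (tg G1) x y}].

(* (s,kappa)-disjointness-expressing classes; subsets of {1,...,N} are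
   represented as subsets of 'I_N = {0,...,N-1}. *)
Definition disjointness_expressing (C : graph -> Prop) (s kappa : nat) : Prop :=
  exists alpha : Rdefinitions.R, Rlt R0 alpha /\
  forall N : nat, (0 < N)%N ->
  exists (k : nat) (L Rg : {set 'I_N} -> tgraph k),
    (forall X, [/\ simple_graph (tg (L X)), injective (tlab (L X)),
                   simple_graph (tg (Rg X)) & injective (tlab (Rg X))]) /\
    forall A B : {set 'I_N},
      let G := glue (L A) (Rg B) in
      [/\ connected_graph (tg G),
          Rle (INR #|gV (tg G)|) (Rmult alpha (Rpower (INR N) (Rinv (INR kappa)))),
          (forall A' B', nbhd_iso G (glue (L A') (Rg B'))),
          (#|cnbhd G| <= s)%N &
          (C (tg G) <-> A :&: B = set0)].

(* Main.v *)
From Stdlib Require Import Rdefinitions Raxioms RIneq Rpower.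
Require Import Defs.
From mathcomp Require Import all_boot all_order all_algebra.
From mathcomp Require Import zify.
Set Implicit Arguments. Unset Strict Implicit.
Import GRing.Theory Num.Theory.
Local Open Scope ring_scope.
Section GL.
Variables (k : nat) (L R : tgraph k).
Lemma glue_inR_keep v (h : glue_keep (R:=R) v) : glue_inR L v = inr (exist _ v h).
Proof.
rewrite /glue_inR.
have gen: forall b (e : (v \in codom (tlab R)) = b), b = false ->
  (if b as b' return ((v \in codom (tlab R)) = b' -> glueV L R)
   then (fun h => inl (tlab L (iinv h))) else (fun h => inr (exist _ v (negbT h)))) e
  = inr (exist _ v h).
  case => // e _. congr inr. congr exist. apply bool_irrelevance.
exact: (gen _ (erefl _) (negbTE h)).
Qed.

Lemma glue_inR_lab j : injective (tlab R) -> glue_inR L (tlab R j) = inl (tlab L j).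
Proof.
move=> inj.
rewrite /glue_inR.
set v := tlab R j.
have gen: forall b (e : (v \in codom (tlab R)) = b), b = true ->
  (if b as b' return ((v \in codom (tlab R)) = b' -> glueV L R)
   then (fun h => inl (tlab L (iinv h))) else (fun h => inr (exist _ v (negbT h)))) e
  = inl (tlab L j).
  case => // e _. by rewrite (inj _ _ (f_iinv e)).
apply: (gen _ (erefl _)). exact: codom_f.
Qed.
End GL.

Definition U (p q : int * int) : Prop :=
  (absz (p.1 - q.1) + absz (p.2 - q.2) = 1)%N.
Definition unitv (p : int * int) : Prop := (absz p.1 + absz p.2 = 1)%N.

Lemma unit_cases (x y : int) : (absz x + absz y = 1)%N ->
  (x = 1 /\ y = 0) \/ (x = -1 /\ y = 0) \/ (x = 0 /\ y = 1) \/ (x = 0 /\ y = -1).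
Proof. move=> h; lia. Qed.

Lemma sq_steps (x1 y1 x2 y2 x3 y3 : int) :
  (absz x1 + absz y1 = 1)%N -> (absz x2 + absz y2 = 1)%N -> (absz x3 + absz y3 = 1)%N ->
  (absz (x1 + x2 + x3)%R + absz (y1 + y2 + y3)%R = 1)%N ->
  ~ (x1 + x2 = 0 /\ y1 + y2 = 0) -> ~ (x2 + x3 = 0 /\ y2 + y3 = 0) ->
  x3 = - x1 /\ y3 = - y1 /\ x1 * x2 + y1 * y2 = 0.
Proof.
move=> h1 h2 h3.
case: (unit_cases h1) => [[-> ->]|[[-> ->]|[[-> ->]|[-> ->]]]];
case: (unit_cases h2) => [[-> ->]|[[-> ->]|[[-> ->]|[-> ->]]]];
case: (unit_cases h3) => [[-> ->]|[[-> ->]|[[-> ->]|[-> ->]]]]; lia.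
Qed.

Lemma perp_steps (v1 v2 w1 w2 r1 r2 : int) :
  (absz v1 + absz v2 = 1)%N -> (absz w1 + absz w2 = 1)%N -> (absz r1 + absz r2 = 1)%N ->
  v1 * r1 + v2 * r2 = 0 -> w1 * r1 + w2 * r2 = 0 ->
  (v1 = w1 /\ v2 = w2) \/ (v1 = - w1 /\ v2 = - w2).
Proof.
move=> h1 h2 h3.
case: (unit_cases h1) => [[-> ->]|[[-> ->]|[[-> ->]|[-> ->]]]];
case: (unit_cases h2) => [[-> ->]|[[-> ->]|[[-> ->]|[-> ->]]]];
case: (unit_cases h3) => [[-> ->]|[[-> ->]|[[-> ->]|[-> ->]]]]; lia.
Qed.

Lemma force_steps (a b u1 u2 r1 r2 : int) :
  (absz a + absz b = 1)%N -> (absz u1 + absz u2 = 1)%N -> (absz r1 + absz r2 = 1)%N ->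
  u1 * r1 + u2 * r2 = 0 ->
  ~ (a = u1 /\ b = u2) -> ~ (a = - u1 /\ b = - u2) -> ~ (a = r1 /\ b = r2) ->
  a = - r1 /\ b = - r2.
Proof.
move=> h1 h2 h3.
case: (unit_cases h1) => [[-> ->]|[[-> ->]|[[-> ->]|[-> ->]]]];
case: (unit_cases h2) => [[-> ->]|[[-> ->]|[[-> ->]|[-> ->]]]];
case: (unit_cases h3) => [[-> ->]|[[-> ->]|[[-> ->]|[-> ->]]]]; lia.
Qed.

Lemma neq_pair (p q : int * int) : p <> q -> ~ (p.1 = q.1 /\ p.2 = q.2).
Proof. case: p q => [a b] [c d] /= h [e1 e2]; apply: h; by rewrite e1 e2. Qed.

Lemma square (a b c d : int * int) : U a b -> U b c -> U c d -> U d a -> a <> c -> b <> d ->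
  [/\ d.1 - a.1 = c.1 - b.1, d.2 - a.2 = c.2 - b.2 &
      (b.1 - a.1) * (c.1 - b.1) + (b.2 - a.2) * (c.2 - b.2) = 0].
Proof.
rewrite /U => h1 h2 h3 h4 /neq_pair n1 /neq_pair n2.
have k1 : (absz (b.1 - a.1) + absz (b.2 - a.2) = 1)%N by clear -h1; lia.
have k2 : (absz (c.1 - b.1) + absz (c.2 - b.2) = 1)%N by clear -h2; lia.
have k3 : (absz (d.1 - c.1) + absz (d.2 - c.2) = 1)%N by clear -h3; lia.
have k4 : (absz (b.1 - a.1 + (c.1 - b.1) + (d.1 - c.1))%R
         + absz (b.2 - a.2 + (c.2 - b.2) + (d.2 - c.2))%R = 1)%N by clear -h4; lia.
have m1 : ~ (b.1 - a.1 + (c.1 - b.1) = 0 /\ b.2 - a.2 + (c.2 - b.2) = 0) by clear -n1; lia.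
have m2 : ~ (c.1 - b.1 + (d.1 - c.1) = 0 /\ c.2 - b.2 + (d.2 - c.2) = 0) by clear -n2; lia.
case: (sq_steps k1 k2 k3 k4 m1 m2) => e1 [e2 e3].
split => //; clear -e1 e2; lia.
Qed.

Lemma step_lin (p q w a : int) (c : nat) : p = w + c%:Z * a -> q - p = a -> q = w + (c.+1)%:Z * a.
Proof. by move=> e1 e2; rewrite -addn1 PoszD mulrDl mul1r addrA -e1 -e2 addrC subrK. Qed.

Lemma ladder (ft fb : nat -> int * int) (m : nat) :
 (forall c, (c < m)%N -> U (ft c) (ft c.+1)) ->
 (forall c, (c < m)%N -> U (fb c) (fb c.+1)) ->
 (forall c, (c <= m)%N -> U (ft c) (fb c)) ->
 (forall c, (c < m)%N -> ft c <> fb c.+1) ->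
 (forall c, (c < m)%N -> ft c.+1 <> fb c) ->
 (forall c, (c.+1 < m)%N -> ft c.+2 <> ft c) ->
 (0 < m)%N ->
 let u1 := (ft 1).1 - (ft 0).1 in let u2 := (ft 1).2 - (ft 0).2 in
 let r1 := (fb 0).1 - (ft 0).1 in let r2 := (fb 0).2 - (ft 0).2 in
 [/\ (absz u1 + absz u2 = 1)%N, (absz r1 + absz r2 = 1)%N, u1 * r1 + u2 * r2 = 0 &
   forall c, (c <= m)%N -> [/\ (ft c).1 = (ft 0).1 + c%:Z * u1, (ft c).2 = (ft 0).2 + c%:Z * u2,
       (fb c).1 = (ft c).1 + r1 & (fb c).2 = (ft c).2 + r2]].
Proof.
move=> Ht Hb Hr D1 D2 D3 m0 u1 u2 r1 r2.
have sq c : (c < m)%N -> [/\ (fb c).1 - (ft c).1 = (fb c.+1).1 - (ft c.+1).1,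
      (fb c).2 - (ft c).2 = (fb c.+1).2 - (ft c.+1).2 &
      ((ft c.+1).1 - (ft c).1) * ((fb c.+1).1 - (ft c.+1).1) +
      ((ft c.+1).2 - (ft c).2) * ((fb c.+1).2 - (ft c.+1).2) = 0].
  move=> cm; case: (square (Ht c cm) (Hr c.+1 cm) _ _ (D1 c cm) (D2 c cm)).
  - by move: (Hb c cm); rewrite /U; clear; lia.
  - by move: (Hr c (ltnW cm)); rewrite /U; clear; lia.
  move=> e1 e2 e3; split => //; clear -e1 e2; lia.
have hu : (absz u1 + absz u2 = 1)%N.
  move: (Ht 0 m0); rewrite /U /u1 /u2; clear; change (ft 0.+1) with (ft 1); move: (ft 0) (ft 1) => p q; lia.
have hr : (absz r1 + absz r2 = 1)%N by move: (Hr 0 isT); rewrite /U /r1 /r2; clear; lia.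
have hur : u1 * r1 + u2 * r2 = 0.
  by case: (sq 0 m0) => e1 e2; rewrite /u1 /u2 /r1 /r2 -e1 -e2.
have claim c : (c <= m)%N -> [/\ (fb c).1 - (ft c).1 = r1, (fb c).2 - (ft c).2 = r2 &
   (c < m)%N -> (ft c.+1).1 - (ft c).1 = u1 /\ (ft c.+1).2 - (ft c).2 = u2].
  elim: c => [|c IH] cm; first by split.
  have cm' : (c < m)%N by [].
  case: (IH (ltnW cm')) => e1 e2 /(_ cm') [v1 v2].
  case: (sq c cm') => f1 f2 _.
  have g1 : (fb c.+1).1 - (ft c.+1).1 = r1 by clear -e1 f1; lia.
  have g2 : (fb c.+1).2 - (ft c.+1).2 = r2 by clear -e2 f2; lia.
  split => // cm2.
  case: (sq c.+1 cm2) => h1 h2 h3.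
  have j1 : (fb c.+2).1 - (ft c.+2).1 = r1 by rewrite -h1.
  have j2 : (fb c.+2).2 - (ft c.+2).2 = r2 by rewrite -h2.
  rewrite j1 j2 in h3.
  have hv : (absz ((ft c.+2).1 - (ft c.+1).1) + absz ((ft c.+2).2 - (ft c.+1).2) = 1)%N.
    by move: (Ht _ cm2); rewrite /U; clear; move: (ft c.+1) (ft c.+2) => p q; lia.
  have hu' : (absz ((ft c.+1).1 - (ft c).1) + absz ((ft c.+1).2 - (ft c).2) = 1)%N.
    by rewrite v1 v2.
  have h4 : ((ft c.+1).1 - (ft c).1) * r1 + ((ft c.+1).2 - (ft c).2) * r2 = 0.
    by rewrite v1 v2.
  case: (perp_steps hv hu' hr h3 h4) => [[k1 k2]|[k1 k2]].
    by split; [rewrite k1 v1 | rewrite k2 v2].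
  have dd := neq_pair (D3 c cm2).
  by exfalso; apply: dd; clear -k1 k2; move: (ft c) (ft c.+1) (ft c.+2) k1 k2 => p q w; lia.
have claim2 c : (c <= m)%N -> (ft c).1 = (ft 0).1 + c%:Z * u1 /\ (ft c).2 = (ft 0).2 + c%:Z * u2.
  elim: c => [|c IH] cm; first by split; rewrite mul0r addr0.
  case: (IH (ltnW cm)) => e1 e2.
  case: (claim c (ltnW cm)) => _ _ /(_ cm) [v1 v2].
  by split; [exact: step_lin e1 v1 | exact: step_lin e2 v2].
split => // c cm.
case: (claim2 c cm) => e1 e2; case: (claim c cm) => f1 f2 _.
by split => //; [rewrite -f1 | rewrite -f2]; rewrite addrC subrK.
Qed.
Lemma final (P1 P2 u1 u2 r1 r2 Q1 Q2 w1 w2 p1 p2 : int) (n c : nat) :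
  (absz u1 + absz u2 = 1)%N -> (absz r1 + absz r2 = 1)%N -> u1 * r1 + u2 * r2 = 0 ->
  (absz w1 + absz w2 = 1)%N -> (absz p1 + absz p2 = 1)%N -> w1 * p1 + w2 * p2 = 0 ->
  (0 < n)%N ->
  P1 + (1%N)%:Z * u1 - r1 = Q1 + (1%N)%:Z * w1 - p1 ->
  P2 + (1%N)%:Z * u2 - r2 = Q2 + (1%N)%:Z * w2 - p2 ->
  P1 + (n.+1)%:Z * u1 - r1 = Q1 + (n.+1)%:Z * w1 - p1 ->
  P2 + (n.+1)%:Z * u2 - r2 = Q2 + (n.+1)%:Z * w2 - p2 ->
  ~ (Q1 + (1%N)%:Z * w1 = P1 + (1%N)%:Z * u1 /\ Q2 + (1%N)%:Z * w2 = P2 + (1%N)%:Z * u2) ->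
  ~ (P1 + c%:Z * u1 - r1 = Q1 + c%:Z * w1 - p1 /\ P2 + c%:Z * u2 - r2 = Q2 + c%:Z * w2 - p2) ->
  False.
Proof.
move=> hu hr hur hw hp hwp n0 e1 e2 e3 e4 n1 n2.
have [uw1 uw2] : u1 = w1 /\ u2 = w2.
  move: e1 e2 e3 e4; clear -hu hw n0.
  case: (unit_cases hu) => [[-> ->]|[[-> ->]|[[-> ->]|[-> ->]]]];
  case: (unit_cases hw) => [[-> ->]|[[-> ->]|[[-> ->]|[-> ->]]]]; lia.
subst w1 w2.
case: (perp_steps hp hr hu _ _); [by rewrite mulrC (mulrC p2)| by rewrite mulrC (mulrC r2) |..].
  by move=> [ee1 ee2]; subst p1 p2; apply: n1; split; lia.
move=> [ee1 ee2]; subst p1 p2; apply: n2; split; lia.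
Qed.

Section GL2.
Variables (k : nat) (L R : tgraph k).
Hypotheses (injL : injective (tlab L)) (injR : injective (tlab R)).

Lemma glue_inR_inj : injective (glue_inR L (R:=R)).
Proof.
move=> u v.
case: (boolP (glue_keep (R:=R) u)) => hu; case: (boolP (glue_keep (R:=R) v)) => hv.
- by rewrite !glue_inR_keep => -[].
- move: hv => /negPn /codomP [j ->]; by rewrite (glue_inR_keep _ hu) glue_inR_lab.
- move: hu => /negPn /codomP [j ->]; by rewrite (glue_inR_keep _ hv) glue_inR_lab.
- move: hu hv => /negPn /codomP [j ->] /negPn /codomP [j' ->].
  by rewrite !glue_inR_lab // => -[] /injL ->.
Qed.

Lemma gL u v : gadj (tg L) u v -> glue_adj (L:=L) (R:=R) (inl u) (inl v).
Proof. by move=> h; apply/orP; left; apply/existsP; exists u; apply/existsP; exists v; rewrite !eqxx. Qed.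

Lemma gR u v : gadj (tg R) u v -> glue_adj (glue_inR L u) (glue_inR L v).
Proof. by move=> h; apply/orP; right; apply/existsP; exists u; apply/existsP; exists v; rewrite !eqxx. Qed.
End GL2.

Section Constr.
Variable N : nat.
Definition V : finType := ( 'I_(N.+3.+3) * bool + ( 'I_N + 'I_2))%type.

Definition pos (X : {set 'I_N}) (v : V) : int * int :=
  match v with
  | inl (c, b) => ((nat_of_ord c)%:Z, if b then 0 else -1)
  | inr (inl i) => ((i + 3)%N%:Z, if i \in X then 1 else -2)
  | inr (inr j) => ((if nat_of_ord j == 0%N then 1 else N + 4)%N%:Z, 1)
  end.

Definition adjH (X : {set 'I_N}) : rel V := fun u v =>
  (absz ((pos X u).1 - (pos X v).1) + absz ((pos X u).2 - (pos X v).2) == 1)%N.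
Definition HG X : graph := @Graph V (adjH X).
Definition spec (j : 'I_2) : V := inr (inr j).
Definition H X : tgraph 2 := @TGraph 2 (HG X) spec.

Lemma H_simple X : simple_graph (tg (H X)).
Proof.
split.
- move=> u v; rewrite /= /adjH; move: (pos X u) (pos X v) => p q.
  by apply/idP/idP => /eqP h; apply/eqP; lia.
- by move=> u; rewrite /= /adjH !subrr.
Qed.

Lemma H_inj X : injective (tlab (H X)).
Proof. by move=> j j' [->]. Qed.

Lemma keep_of B (v : V) : (forall j, v <> spec j) -> glue_keep (R:=H B) v.
Proof. by move=> h; apply/codomP => -[j e]; exact: h j e. Qed.

End Constr.
Arguments spec {N} j.

Section Emb.
Variable N : nat.
Implicit Types (A B X : {set 'I_N}).

Lemma pos_inj X : injective (pos X).
Proof.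
move=> u v E; have e1 := congr1 fst E; have e2 := congr1 snd E.
move: u v E e1 e2 => [[c b]|[i|j]] [[c' b']|[i'|j']] _ /= e1 e2.
- move/eqP: e1; rewrite eqz_nat => /eqP /val_inj ->.
  by case: b b' e2 => -[].
- by move: e2; case: b; case: ifP.
- by move: e2; case: b.
- by move: e2; case: b'; case: ifP.
- move/eqP: e1; rewrite eqz_nat => /eqP e1.
  by have -> : i = i' by apply/val_inj => /=; move: e1; clear; lia.
- exfalso; move: e1 e2; repeat case: ifP => _; try (have := ltn_ord i); try (have := ltn_ord i'); lia.
- by move: e2; case: b'.
- exfalso; move: e1 e2; repeat case: ifP => _; try (have := ltn_ord i); try (have := ltn_ord i'); lia.
- move/eqP: e1; rewrite eqz_nat => /eqP.
  case: j j' => [[|[|j]] hj] [[|[|j']] hj'] /=; try lia.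
  + by rewrite (bool_irrelevance hj hj').
  + by rewrite (bool_irrelevance hj hj').
Qed.

Definition mirror (p : int * int) : int * int := (p.1, 2 - p.2).

Definition emb A B (x : glueV (H A) (H B)) : int * int :=
  match x with inl u => pos A u | inr v => mirror (pos B (val v)) end.

Lemma not_keep B (v : V N) : ~~ glue_keep (R:=H B) v -> exists j, v = spec j.
Proof. by move/negPn/codomP => [j ->]; exists j. Qed.

Lemma emb_inR A B v : emb (glue_inR (H A) (R:=H B) v) = mirror (pos B v).
Proof.
case: (boolP (glue_keep (R:=H B) v)) => h; first by rewrite (glue_inR_keep _ h).
case: (not_keep h) => j ->.
rewrite (glue_inR_lab (H A) (R:=H B) j (@H_inj N B)) /= /mirror /=.
congr pair; lia.
Qed.

Lemma emb_edge A B (x y : glueV (H A) (H B)) : glue_adj x y -> U (emb x) (emb y).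
Proof.
case/orP => /existsP [u /existsP [v /and3P [/eqP <- /eqP <- h]]].
- exact/eqP.
- rewrite !emb_inR; move/eqP: h; rewrite /U /mirror /=; move: (pos B u) (pos B v) => p q; lia.
Qed.

Lemma emb_inj A B : A :&: B = set0 -> injective (@emb A B).
Proof.
move=> AB.
have cross u (v : V N) : glue_keep (R:=H B) v -> pos A u <> mirror (pos B v).
  move=> hv E; have e1 := congr1 fst E; have e2 := congr1 snd E.
  move: u v hv E e1 e2 => [[c b]|[i|j]] [[c' b']|[i'|j']] hv _ /=; rewrite /mirror /=.
  all: try (by move=> *; apply: (negP hv); apply/codomP; exists j').
  all: try clear hv.
  all: try (by case: b; case: b'; move=> *; lia).
  all: try (by case: b; case: ifP => *; lia).
  all: try (by case: b'; case: ifP => *; lia).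
  all: try (by case: ifP => _; case: ifP => _; have := ltn_ord i'; lia).
  case: ifP => iA; case: ifP => iB; try lia.
  move=> /eqP; rewrite eqz_nat => /eqP e1 _.
  have ii : i = i' by apply/val_inj => /=; move: e1; clear; lia.
  subst i'.
  have : i \in A :&: B by rewrite inE iA iB.
  by rewrite AB inE.
move=> [u|[v hv]] [u'|[v' hv']] /=.
- by move/pos_inj => ->.
- by move/cross => /(_ hv').
- by move=> E; exfalso; apply: (cross u' v hv); rewrite E.
- rewrite /mirror => E; have e1 := congr1 fst E; have e2 := congr1 snd E.
  move: e1 e2 => /= e1 e2.
  have e : pos B v = pos B v'.
    move: e1 e2; case: (pos B v) => a b; case: (pos B v') => a' b' /= -> e2.
    by congr pair; move: e2; clear; lia.
  move/pos_inj: e => e; subst v'.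
  by rewrite (bool_irrelevance hv hv').
Qed.
End Emb.

Lemma succ_mul (d : nat) (u : int) : (d.+1)%:Z * u = d%:Z * u + u.
Proof. by rewrite -addn1 PoszD mulrDl mul1r. Qed.

Lemma force_lad (ft fb : nat -> int * int) (m : nat) (P1 P2 u1 u2 r1 r2 : int) (d : nat) (z : int * int) :
  (absz u1 + absz u2 = 1)%N -> (absz r1 + absz r2 = 1)%N -> u1 * r1 + u2 * r2 = 0 ->
  (forall c, (c <= m)%N -> [/\ (ft c).1 = P1 + c%:Z * u1, (ft c).2 = P2 + c%:Z * u2,
       (fb c).1 = (ft c).1 + r1 & (fb c).2 = (ft c).2 + r2]) ->
  (d.+2 <= m)%N ->
  U z (ft d.+1) -> z <> ft d.+2 -> z <> ft d -> z <> fb d.+1 ->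
  z.1 = (ft d.+1).1 - r1 /\ z.2 = (ft d.+1).2 - r2.
Proof.
move=> hu hr hur hp dm hz n1 n2 n3.
case: (hp d (leqW (ltnW dm))) => a1 a2 _ _.
case: (hp d.+1 (ltnW dm)) => b1 b2 b3 b4.
case: (hp d.+2 dm) => c1 c2 _ _.
move/neq_pair: n1; move/neq_pair: n2; move/neq_pair: n3; move: hz; rewrite /U.
rewrite b3 b4 a1 a2 b1 b2 c1 c2 !succ_mul.
move: (z.1) (z.2) (d%:Z * u1) (d%:Z * u2) => z1 z2 x1 x2 hz n3 n2 n1.
have := @force_steps (z1 - (P1 + (x1 + u1))) (z2 - (P2 + (x2 + u2))) u1 u2 r1 r2.
case.
- by clear -hz; lia.
- done.
- done.
- done.
- by clear -n1; lia.
- by clear -n2; lia.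
- by clear -n3; lia.
move=> e1 e2; split; clear -e1 e2; lia.
Qed.

Section Rigid.
Variable N : nat.
Implicit Types (X : {set 'I_N}).

Definition lad (c : nat) (b : bool) : V N := inl (inord c, b).
Definition tooth (i : 'I_N) : V N := inr (inl i).

Lemma adj_h X c b : (c < N.+4.+1)%N -> adjH X (lad c b) (lad c.+1 b).
Proof. move=> h; rewrite /adjH /= !inordK; [|lia|lia]; case: b; apply/eqP; lia. Qed.

Lemma adj_v X c : (c <= N.+4.+1)%N -> adjH X (lad c true) (lad c false).
Proof. move=> h; rewrite /adjH /= !inordK; [|lia]; apply/eqP; lia. Qed.

Lemma adj_s0 X : adjH X (spec ord0) (lad 1 true).
Proof. rewrite /adjH /= !inordK; [|lia]; apply/eqP; lia. Qed.

Lemma adj_s1 X : adjH X (spec ord_max) (lad N.+4 true).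
Proof. rewrite /adjH /= !inordK; [|lia]; apply/eqP; lia. Qed.

Lemma adj_t X i : i \in X -> adjH X (tooth i) (lad i.+3 true).
Proof. move=> iX; rewrite /adjH /= iX !inordK; [|have := ltn_ord i; lia]; apply/eqP; lia. Qed.

Lemma keep_lad B c b : glue_keep (R:=H B) (lad c b).
Proof. by apply: keep_of. Qed.
Lemma keep_tooth B i : glue_keep (R:=H B) (tooth i).
Proof. by apply: keep_of. Qed.

Variables A B : {set 'I_N}.
Notation GV := (glueV (H A) (H B)).

Definition code (x : GV) : nat * nat * bool :=
  match x with
  | inl (inl (c, b)) => (0%N, nat_of_ord c, b)
  | inl (inr (inl i)) => (1%N, nat_of_ord i, true)
  | inl (inr (inr j)) => (2%N, nat_of_ord j, true)
  | inr v => match val v with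
    | inl (c, b) => (3%N, nat_of_ord c, b)
    | inr (inl i) => (4%N, nat_of_ord i, true)
    | inr (inr j) => (5%N, nat_of_ord j, true) end
  end.

Definition Lt c : GV := inl (lad c true).
Definition Lb c : GV := inl (lad c false).
Definition Rt c : GV := inr (exist _ (lad c true) (keep_lad B c true)).
Definition Rb c : GV := inr (exist _ (lad c false) (keep_lad B c false)).
Definition Ta i : GV := inl (tooth i).
Definition Tb i : GV := inr (exist _ (tooth i) (keep_tooth B i)).
Definition Sv j : GV := inl (spec j).

Lemma inR_lad c b : glue_inR (H A) (R:=H B) (lad c b) = inr (exist _ (lad c b) (keep_lad B c b)).
Proof. exact: glue_inR_keep. Qed.
Lemma inR_tooth i : glue_inR (H A) (R:=H B) (tooth i) = Tb i.
Proof. exact: glue_inR_keep. Qed.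
Lemma inR_spec j : glue_inR (H A) (R:=H B) (spec j) = Sv j.
Proof. exact: (glue_inR_lab (H A) (R:=H B) j (@H_inj N B)). Qed.

Lemma rigid (f : GV -> int * int) : injective f ->
  (forall x y, glue_adj x y -> U (f x) (f y)) -> forall i, i \in A -> i \in B -> False.
Proof.
move=> finj fe i iA iB.
have fc x y : f x = f y -> code x = code y by move/finj ->.
pose m := N.+4.+1.
have := @ladder (fun c => f (Lt c)) (fun c => f (Lb c)) m.
case.
- by move=> c cm; apply: fe; apply: gL; apply: adj_h.
- by move=> c cm; apply: fe; apply: gL; apply: adj_h.
- by move=> c cm; apply: fe; apply: gL; apply: adj_v.
- by move=> c cm /fc.
- by move=> c cm /fc.
- move=> c cm /fc /= [] /eqP; rewrite !inordK; lia.
- by [].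
move=> hu hr hur hL.
have := @ladder (fun c => f (Rt c)) (fun c => f (Rb c)) m.
case.
- by move=> c cm; apply: fe; rewrite /Rt -!inR_lad; apply: gR; apply: adj_h.
- by move=> c cm; apply: fe; rewrite /Rb -!inR_lad; apply: gR; apply: adj_h.
- by move=> c cm; apply: fe; rewrite /Rt /Rb -!inR_lad; apply: gR; apply: adj_v.
- by move=> c cm /fc.
- by move=> c cm /fc.
- move=> c cm /fc /= [] /eqP; rewrite !inordK; lia.
- by [].
move=> hw hp hwp hR.
have iN := ltn_ord i.
have [sL1 sL2] := @force_lad (fun c => f (Lt c)) (fun c => f (Lb c)) m _ _ _ _ _ _ (0) _ hu hr hur hL (isT : (2 <= m)%N)
   (fe _ _ (@gL _ (H A) (H B) _ _ (adj_s0 A))) (ltac:(by move/fc))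
   (ltac:(by move/fc)) (ltac:(by move/fc)).
have eR (x y : V N) : adjH B x y -> U (f (glue_inR (H A) (R:=H B) x)) (f (glue_inR (H A) (R:=H B) y)).
  by move=> h; apply: fe; apply: (@gR _ (H A) (H B)).
have [sR1 sR2] : (f (Sv ord0)).1 = (f (Rt 1)).1 - ((f (Rb 0)).1 - (f (Rt 0)).1) /\
                 (f (Sv ord0)).2 = (f (Rt 1)).2 - ((f (Rb 0)).2 - (f (Rt 0)).2).
  apply: (@force_lad (fun c => f (Rt c)) (fun c => f (Rb c)) m _ _ _ _ _ _ (0) _ hw hp hwp hR (isT : (2 <= m)%N)).
  - by have := eR _ _ (adj_s0 B); rewrite inR_spec inR_lad.
  - by move/fc.
  - by move/fc.
  - by move/fc.
have [tL1 tL2] := @force_lad (fun c => f (Lt c)) (fun c => f (Lb c)) m _ _ _ _ _ _ (N.+3) _ hu hr hur hL (leqnn _)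
   (fe _ _ (@gL _ (H A) (H B) _ _ (adj_s1 A))) (ltac:(by move/fc))
   (ltac:(by move/fc)) (ltac:(by move/fc)).
have [tR1 tR2] : (f (Sv ord_max)).1 = (f (Rt N.+4)).1 - ((f (Rb 0)).1 - (f (Rt 0)).1) /\
                 (f (Sv ord_max)).2 = (f (Rt N.+4)).2 - ((f (Rb 0)).2 - (f (Rt 0)).2).
  apply: (@force_lad (fun c => f (Rt c)) (fun c => f (Rb c)) m _ _ _ _ _ _ (N.+3) _ hw hp hwp hR (leqnn _)).
  - by have := eR _ _ (adj_s1 B); rewrite inR_spec inR_lad.
  - by move/fc.
  - by move/fc.
  - by move/fc.
have im : (i.+2.+2 <= m)%N by rewrite /m; lia.
have [aL1 aL2] := @force_lad (fun c => f (Lt c)) (fun c => f (Lb c)) m _ _ _ _ _ _ (i.+2) _ hu hr hur hL im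
   (fe _ _ (@gL _ (H A) (H B) _ _ (adj_t iA))) (ltac:(by move/fc))
   (ltac:(by move/fc)) (ltac:(by move/fc)).
have [aR1 aR2] : (f (Tb i)).1 = (f (Rt i.+3)).1 - ((f (Rb 0)).1 - (f (Rt 0)).1) /\
                 (f (Tb i)).2 = (f (Rt i.+3)).2 - ((f (Rb 0)).2 - (f (Rt 0)).2).
  apply: (@force_lad (fun c => f (Rt c)) (fun c => f (Rb c)) m _ _ _ _ _ _ (i.+2) _ hw hp hwp hR im).
  - by have := eR _ _ (adj_t iB); rewrite inR_tooth inR_lad.
  - by move/fc.
  - by move/fc.
  - by move/fc.
have pe (p q : int * int) : p.1 = q.1 -> p.2 = q.2 -> p = q by case: p q => [? ?] [? ?] /= -> ->.
case: (hL 1 isT) => L11 L12 _ _; case: (hR 1 isT) => R11 R12 _ _.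
case: (hL N.+4 (leqnSn _)) => L21 L22 _ _; case: (hR N.+4 (leqnSn _)) => R21 R22 _ _.
have c3 : (i.+3 <= m)%N by rewrite /m; lia.
case: (hL i.+3 c3) => L31 L32 _ _; case: (hR i.+3 c3) => R31 R32 _ _.
apply: (@final (f (Lt 0)).1 (f (Lt 0)).2 _ _ _ _ (f (Rt 0)).1 (f (Rt 0)).2 _ _ _ _ N.+3 i.+3 hu hr hur hw hp hwp isT).
- by rewrite -L11 -R11 -sL1 -sR1.
- by rewrite -L12 -R12 -sL2 -sR2.
- by rewrite -L21 -R21 -tL1 -tR1.
- by rewrite -L22 -R22 -tL2 -tR2.
- move=> [e1 e2].
  have : f (Rt 1) = f (Lt 1) by apply: pe; [rewrite R11 L11; exact: e1 | rewrite R12 L12; exact: e2].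
  by move/fc.
- move=> [e1 e2].
  have : f (Ta i) = f (Tb i) by apply: pe; [rewrite aL1 aR1 L31 R31; exact: e1 | rewrite aL2 aR2 L32 R32; exact: e2].
  by move/fc.
Qed.
End Rigid.
Arguments lad {N} c b.

Section GLsym.
Variables (k : nat) (L R : tgraph k).
Lemma glue_sym : symmetric (gadj (tg L)) -> symmetric (gadj (tg R)) -> symmetric (glue_adj (L:=L) (R:=R)).
Proof.
move=> sL sR x y; apply/idP/idP;
case/orP => /existsP [u /existsP [v /and3P [hu hv h]]]; apply/orP;
[left|right|left|right]; apply/existsP; exists v; apply/existsP; exists u;
by rewrite hu hv ?(sL v u) ?(sR v u).
Qed.
End GLsym.

Section Main.
Variable N : nat.
Implicit Types (X A B : {set 'I_N}).

Lemma spec_nbr X (j : 'I_2) (v : V N) : adjH X (spec j) v ->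
  v = lad (if nat_of_ord j == 0%N then 1%N else N.+4) true.
Proof.
case: v => [[c b]|[t|j']]; rewrite /adjH /=.
- case: b; last by case: ifP => _ /eqP; lia.
  case: ifP => hj /eqP h; congr inl; congr pair; apply/val_inj; rewrite /= inordK; lia.
- by case: ifP => _; case: ifP => _ /eqP; have := ltn_ord t; lia.
- case: j j' => [[|[|j]] hj] [[|[|j']] hj'] //= /eqP; lia.
Qed.

Lemma inR_inl A B (u w : V N) : glue_inR (H A) (R:=H B) u = inl w -> u = w.
Proof.
case: (boolP (glue_keep (R:=H B) u)) => h; first by rewrite (glue_inR_keep _ h).
case: (not_keep h) => j ->; rewrite inR_spec; by case.
Qed.

Lemma ord2_cases (j : 'I_2) : j = ord0 \/ j = ord_max.
Proof. by case: j => [[|[|j]] hj] //; [left|right]; apply/val_inj. Qed.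

Definition E A B : {set glueV (H A) (H B)} :=
  [set inl (spec ord0); inl (spec ord_max); inl (lad 1 true); inl (lad N.+4 true);
       glue_inR (H A) (R:=H B) (lad 1 true); glue_inR (H A) (R:=H B) (lad N.+4 true)].

Lemma E_conv A B A' B' : E A B = E A' B' :> {set glueV (H A) (H B)}.
Proof. by []. Qed.

Lemma cardE6 A B : (#|E A B| <= 6)%N.
Proof.
have h (T : finType) (A0 : {set T}) x : (#|A0 :|: [set x]| <= #|A0|.+1)%N.
  by rewrite setUC cardsU1; case: (_ \notin _).
rewrite /E; do 4! (apply: (leq_trans (h _ _ _)); rewrite ltnS).
by rewrite cardsU1 cards1; case: (_ \notin _).
Qed.

Lemma cnbhd_E A B : cnbhd (glue (H A) (H B)) = E A B.
Proof.
apply/setP => x; rewrite /cnbhd inE; apply/existsP/idP.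
- move=> [j /orP [/eqP -> | h]].
  + by case: (ord2_cases j) => ->; rewrite /= !inE eqxx ?orbT.
  + case/orP: h => /existsP [u /existsP [v /and3P [/eqP hu /eqP <- h]]].
    * case: hu => ->{u} in h *; rewrite (spec_nbr h) !inE.
      by case: (ord2_cases j) => -> /=; rewrite eqxx ?orbT.
    * have eu := inR_inl hu; subst u; rewrite (spec_nbr h) !inE.
      by case: (ord2_cases j) => -> /=; rewrite eqxx ?orbT.
- rewrite !inE => /orP [/orP [/orP [/orP [/orP [/eqP ->|/eqP ->]|/eqP ->]|/eqP ->]|/eqP ->]|/eqP ->].
  + by exists ord0; rewrite eqxx.
  + by exists ord_max; rewrite eqxx.
  + by exists ord0; apply/orP; right; apply: (@gL _ (H A) (H B) _ _ (adj_s0 A)).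
  + by exists ord_max; apply/orP; right; apply: (@gL _ (H A) (H B) _ _ (adj_s1 A)).
  + exists ord0; apply/orP; right.
    by have := @gR _ (H A) (H B) _ _ (adj_s0 B); rewrite inR_spec.
  + exists ord_max; apply/orP; right.
    by have := @gR _ (H A) (H B) _ _ (adj_s1 B); rewrite inR_spec.
Qed.

End Main.

Local Close Scope ring_scope.

Section M2.
Variable N : nat.
Implicit Types (X A B : {set 'I_N}).

Definition notooth (v : V N) : bool := if v is inr (inl _) then false else true.

Lemma pos_nt X X' v : notooth v -> pos X v = pos X' v.
Proof. by case: v => [[c b]|[i|j]]. Qed.

Lemma adj_nt X X' u v : notooth u -> notooth v -> adjH X u v = adjH X' u v.
Proof. by move=> hu hv; rewrite /adjH (pos_nt X X' hu) (pos_nt X X' hv). Qed.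

Definition gnt A B (x : glueV (H A) (H B)) : bool :=
  match x with inl u => notooth u | inr v => notooth (val v) end.

Lemma gnt_inR A B u : gnt (glue_inR (H A) (R:=H B) u) = notooth u.
Proof.
case: (boolP (glue_keep (R:=H B) u)) => h; first by rewrite (glue_inR_keep _ h).
by case: (not_keep h) => j ->; rewrite inR_spec.
Qed.

Lemma transfer A B A' B' (x y : glueV (H A) (H B)) : gnt x -> gnt y ->
  glue_adj x y -> @glue_adj _ (H A') (H B') x y.
Proof.
move=> hx hy; case/orP => /existsP [u /existsP [v /and3P [/eqP hu /eqP hv h]]].
- apply/orP; left; apply/existsP; exists u; apply/existsP; exists v.
  subst x y; rewrite !eqxx /=.
  by rewrite (adj_nt A' A hx hy).
- apply/orP; right; apply/existsP; exists u; apply/existsP; exists v.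
  subst x y; rewrite !eqxx /=.
  rewrite gnt_inR in hx; rewrite gnt_inR in hy.
  by rewrite (adj_nt B' B hx hy).
Qed.

Lemma E_gnt A B x : x \in E A B -> gnt x.
Proof.
rewrite !inE => /orP [/orP [/orP [/orP [/orP [/eqP ->|/eqP ->]|/eqP ->]|/eqP ->]|/eqP ->]|/eqP ->] //;
by rewrite gnt_inR.
Qed.

Lemma iso A B A' B' : nbhd_iso (glue (H A) (H B)) (glue (H A') (H B')).
Proof.
exists id; split.
- by move=> x y.
- rewrite imset_id !cnbhd_E; exact: E_conv.
- by [].
- move=> x y; rewrite cnbhd_E => hx hy /=.
  apply/idP/idP; apply: transfer; exact: E_gnt.
Qed.

Lemma adj_t' X i : i \notin X -> adjH X (tooth i) (lad i.+3 false).
Proof. move=> iX; rewrite /adjH /= (negbTE iX) !inordK; [|have := ltn_ord i; lia]; apply/eqP; lia. Qed.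

Lemma conn_all A B : connected_graph (tg (glue (H A) (H B))).
Proof.
set e := glue_adj (L:=H A) (R:=H B).
have sym : symmetric e := glue_sym (H_simple A).1 (H_simple B).1.
have symX X u v : adjH X u v = adjH X v u := (H_simple X).1 u v.
have lc X (phi : V N -> glueV (H A) (H B)) : (forall u v, adjH X u v -> e (phi u) (phi v)) ->
    forall c b, (c <= N.+4.+1)%N -> connect e (phi (lad c b)) (phi (lad 0 true)).
  move=> hphi.
  have top c : (c <= N.+4.+1)%N -> connect e (phi (lad c true)) (phi (lad 0 true)).
    elim: c => [|c IH] hc; first exact: connect0.
    apply: connect_trans (IH (ltnW hc)); apply: connect1; apply: hphi.
    by rewrite symX; apply: adj_h.
  move=> c [] hc; first exact: top.
  apply: connect_trans (top c hc); apply: connect1; apply: hphi.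
  by rewrite symX; apply: adj_v.
have gl u v : adjH A u v -> e (inl u) (inl v) by move=> h; exact: (@gL _ (H A) (H B) _ _ h).
have gr (u v : V N) : adjH B u v -> e (glue_inR (H A) (R:=H B) u) (glue_inR (H A) (R:=H B) v)
  by move=> h; exact: (@gR _ (H A) (H B) _ _ h).
set r : glueV (H A) (H B) := inl (lad 0 true).
have lr c b : (c <= N.+4.+1)%N -> connect e (inl (lad c b)) r by move=> hc; exact: (lc A _ gl).
have rr : connect e (glue_inR (H A) (R:=H B) (lad 0 true)) r.
  apply: connect_trans (_ : connect e _ (glue_inR (H A) (R:=H B) (spec ord0))) _.
    apply: connect_trans (connect1 (gr _ _ (adj_h B true (isT : (0 < N.+4.+1)%N)))) _.
    by apply: connect1; apply: gr; rewrite symX; exact: adj_s0.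
  rewrite inR_spec; apply: connect_trans (connect1 (gl _ _ (adj_s0 A))) _; exact: lr.
have rc c b : (c <= N.+4.+1)%N -> connect e (glue_inR (H A) (R:=H B) (lad c b)) r.
  by move=> hc; apply: connect_trans (lc B _ gr c b hc) rr.
have all x : connect e x r.
  case: x => [u|[v hv]].
  - case: u => [[c b]|[i|j]].
    + have -> : inl (c, b) = lad c b by rewrite /lad inord_val.
      by apply: lr; rewrite -ltnS.
    + have iN := ltn_ord i.
      case: (boolP (i \in A)) => iA.
        by apply: connect_trans (connect1 (gl _ _ (adj_t iA))) _; apply: lr; lia.
      by apply: connect_trans (connect1 (gl _ _ (adj_t' iA))) _; apply: lr; lia.
    + case: (ord2_cases j) => ->.
        by apply: connect_trans (connect1 (gl _ _ (adj_s0 A))) _; apply: lr.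
      by apply: connect_trans (connect1 (gl _ _ (adj_s1 A))) _; apply: lr.
  - have -> : inr (exist _ v hv) = glue_inR (H A) (R:=H B) v by rewrite (glue_inR_keep _ hv).
    case: v hv => [[c b]|[i|j]] hv.
    + have -> : inl (c, b) = lad c b by rewrite /lad inord_val.
      by apply: rc; rewrite -ltnS.
    + have iN := ltn_ord i.
      case: (boolP (i \in B)) => iB.
        by apply: connect_trans (connect1 (gr _ _ (adj_t iB))) _; apply: rc; lia.
      by apply: connect_trans (connect1 (gr _ _ (adj_t' iB))) _; apply: rc; lia.
    + by case/negP: hv; apply/codomP; exists j.
move=> x y; apply: connect_trans (all x) _.
by rewrite (sym_connect_sym sym); exact: all.
Qed.

Lemma card_glue A B : (0 < N)%N -> (#|glueV (H A) (H B)| <= 34 * N)%N.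
Proof.
move=> N0.
have hV : #|V N| = (N.+3.+3 * 2 + (N + 2))%N by rewrite /V card_sum card_prod !card_sum !card_ord card_bool.
rewrite /glueV card_sum card_sig.
apply: leq_trans (leq_add (leqnn _) (max_card _)) _.
rewrite hV; lia.
Qed.

End M2.

Theorem theorem5p5 : disjointness_expressing grid_subgraph 6 1.
Proof.
exists (INR 34); split; first by apply: lt_0_INR; apply/ltP.
move=> N N0; exists 2%N, (@H N), (@H N); split.
  by move=> X; split; [exact: H_simple | exact: H_inj | exact: H_simple | exact: H_inj].
move=> A B; cbv zeta; split.
- exact: conn_all.
- have e : Rpower (INR N) (Rinv (INR 1)) = INR N.
    by rewrite /= Rinv_1 Rpower_1 //; apply: lt_0_INR; apply/ltP.
  rewrite e -mult_INR; apply: le_INR; apply/leP; exact: card_glue.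
- move=> A' B'; exact: iso.
- rewrite cnbhd_E; exact: (cardE6 A B).
- split.
  + case=> f [finj fe].
    apply/setP => i; rewrite inE in_set0; apply/negP => /andP [iA iB].
    exact: (rigid finj fe iA iB).
  + move=> AB; exists (@emb N A B); split; first exact: emb_inj.
    by move=> u v h; exact: emb_edge h.
Qed.
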